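(* For $n\geq 5$, the commutator subgroup $\Gamma_2(VB_n)$ of the virtual braid group $VB_n$ is perfect, i.e. $\Gamma_2(VB_n)=[\Gamma_2(VB_n),\Gamma_2(VB_n)]$.
   Context: The virtual braid group $VB_n$ is the group with generators $\sigma_i,\rho_i$ ($i=1,\dots,n-1$) and defining relations: $\sigma_i\sigma_{i+1}\sigma_i=\sigma_{i+1}\sigma_i\sigma_{i+1}$ ($1\le i\le n-2$); $\sigma_i\sigma_j=\sigma_j\sigma_i$ ($|i-j|\geq 2$); $\rho_i\rho_{i+1}\rho_i=\rho_{i+1}\rho_i\rho_{i+1}$ ($1\le i\le n-2$); $\rho_i\rho_j=\rho_j\rho_i$ ($|i-j|\geq 2$); $\rho_i^2=1$; $\sigma_i\rho_j=\rho_j\sigma_i$ ($|i-j|\geq2$); $\rho_i\rho_{i+1}\sigma_i=\sigma_{i+1}\rho_i\rho_{i+1}$ ($1\le i\le n-2$). $\Gamma_2(G)=[G,G]$. *)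

(* Defs.v *)
(* The virtual braid group VB_n is encoded by its presentation:
   elements are words in the generators sigma_i, rho_i (1 <= i <= n-1) and
   their inverses, modulo the congruence generated by free cancellation and
   the defining relations of VB_n. *)
From Stdlib Require Import List Arith.
Import ListNotations.

Inductive gen : Type := sig (i : nat) | rho (i : nat).

(* a letter: a generator together with a flag; true = inverse of the generator *)
Definition letter : Type := (gen * bool)%type.
Definition word : Type := list letter.

Definition gidx (g : gen) : nat := match g with sig i => i | rho i => i end.

Definition valid (n : nat) (w : word) : Prop :=
  Forall (fun x => 1 <= gidx (fst x) /\ gidx (fst x) <= n - 1) w.

Definition S (i : nat) : word := [(sig i, false)].
Definition P (i : nat) : word := [(rho i, false)].

Definition inv_letter (x : letter) : letter := (fst x, negb (snd x)).
Definition winv (w : word) : word := rev (map inv_letter w).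

Inductive vb_rel (n : nat) : word -> word -> Prop :=
| rel_braid_s i : 1 <= i -> i <= n - 2 ->
    vb_rel n (S i ++ S (i+1) ++ S i) (S (i+1) ++ S i ++ S (i+1))
| rel_comm_s i j : 1 <= i -> i <= n - 1 -> 1 <= j -> j <= n - 1 ->
    i + 2 <= j \/ j + 2 <= i -> vb_rel n (S i ++ S j) (S j ++ S i)
| rel_braid_r i : 1 <= i -> i <= n - 2 ->
    vb_rel n (P i ++ P (i+1) ++ P i) (P (i+1) ++ P i ++ P (i+1))
| rel_comm_r i j : 1 <= i -> i <= n - 1 -> 1 <= j -> j <= n - 1 ->
    i + 2 <= j \/ j + 2 <= i -> vb_rel n (P i ++ P j) (P j ++ P i)
| rel_invol_r i : 1 <= i -> i <= n - 1 -> vb_rel n (P i ++ P i) []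
| rel_comm_sr i j : 1 <= i -> i <= n - 1 -> 1 <= j -> j <= n - 1 ->
    i + 2 <= j \/ j + 2 <= i -> vb_rel n (S i ++ P j) (P j ++ S i)
| rel_mixed i : 1 <= i -> i <= n - 2 ->
    vb_rel n (P i ++ P (i+1) ++ S i) (S (i+1) ++ P i ++ P (i+1)).

Inductive veq (n : nat) : word -> word -> Prop :=
| veq_refl w : veq n w w
| veq_sym u v : veq n u v -> veq n v u
| veq_trans u v w : veq n u v -> veq n v w -> veq n u w
| veq_cancel u v x : veq n (u ++ x :: inv_letter x :: v) (u ++ v)
| veq_rel u v l r : vb_rel n l r -> veq n (u ++ l ++ v) (u ++ r ++ v).

Definition comm (a b : word) : word := winv a ++ winv b ++ a ++ b.

Inductive gen_sub (n : nat) (X : word -> Prop) : word -> Prop :=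
| gs_one : gen_sub n X []
| gs_base w : valid n w -> X w -> gen_sub n X w
| gs_inv w : gen_sub n X w -> gen_sub n X (winv w)
| gs_mul u v : gen_sub n X u -> gen_sub n X v -> gen_sub n X (u ++ v)
| gs_eq u v : valid n v -> veq n u v -> gen_sub n X u -> gen_sub n X v.

Definition comm_sub (n : nat) (H K : word -> Prop) : word -> Prop :=
  gen_sub n (fun w => exists a b, valid n a /\ valid n b /\ H a /\ K b /\ w = comm a b).

Definition Gamma2 (n : nat) : word -> Prop :=
  comm_sub n (fun _ => True) (fun _ => True).

(* Main.v *)
Require Import Defs.
From Stdlib Require Import List Arith Lia Setoid Morphisms.
Import ListNotations.

Lemma veq_app_l n u u' v : veq n u u' -> veq n (u ++ v) (u' ++ v).
Proof.
  induction 1 as [w|u0 v0 _ IH|u0 v0 w0 _ IH1 _ IH2|u0 v0 x|u0 v0 l r Hr].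
  - apply veq_refl.
  - now apply veq_sym.
  - eapply veq_trans; eauto.
  - rewrite <- !app_assoc. exact (veq_cancel n u0 (v0 ++ v) x).
  - rewrite <- !app_assoc. exact (veq_rel n u0 (v0 ++ v) l r Hr).
Qed.

Lemma veq_app_r n u v v' : veq n v v' -> veq n (u ++ v) (u ++ v').
Proof.
  induction 1 as [w|u0 v0 _ IH|u0 v0 w0 _ IH1 _ IH2|u0 v0 x|u0 v0 l r Hr].
  - apply veq_refl.
  - now apply veq_sym.
  - eapply veq_trans; eauto.
  - rewrite !(app_assoc u u0). exact (veq_cancel n (u ++ u0) v0 x).
  - rewrite !(app_assoc u u0). exact (veq_rel n (u ++ u0) v0 l r Hr).
Qed.

#[global] Instance veq_equiv n : Equivalence (veq n).
Proof. split; [intro; apply veq_refl | intros ??; apply veq_sym | intros ???; apply veq_trans]. Qed.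

#[global] Instance app_prop n : Proper (veq n ==> veq n ==> veq n) (@app letter).
Proof. intros u u' Hu v v' Hv. transitivity (u' ++ v); [apply veq_app_l|apply veq_app_r]; auto. Qed.

Lemma inv_inv x : inv_letter (inv_letter x) = x.
Proof. destruct x as [g b]; unfold inv_letter; simpl; now rewrite Bool.negb_involutive. Qed.

Lemma winv_app u v : winv (u ++ v) = winv v ++ winv u.
Proof. unfold winv. now rewrite map_app, rev_app_distr. Qed.

Lemma winv_winv u : winv (winv u) = u.
Proof.
  unfold winv. rewrite map_rev, rev_involutive, map_map.
  rewrite <- (map_id u) at 2. apply map_ext. apply inv_inv.
Qed.

Lemma cancel_r n u t : veq n (u ++ winv u ++ t) t.
Proof.
  revert t; induction u as [|x u IH]; intro t; [apply veq_refl|].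
  change (x :: u) with ([x] ++ u). rewrite winv_app.
  rewrite <- !app_assoc.
  rewrite (IH (winv [x] ++ t)).
  exact (veq_cancel n [] t x).
Qed.

Lemma cancel_l n u t : veq n (winv u ++ u ++ t) t.
Proof. pose proof (cancel_r n (winv u) t) as H. now rewrite winv_winv in H. Qed.

Lemma cancel_r' n u : veq n (u ++ winv u) [].
Proof. pose proof (cancel_r n u []) as H. now rewrite app_nil_r in H. Qed.

Lemma cancel_l' n u : veq n (winv u ++ u) [].
Proof. pose proof (cancel_l n u []) as H. now rewrite app_nil_r in H. Qed.

#[global] Instance winv_prop n : Proper (veq n ==> veq n) winv.
Proof.
  intros u v H.
  transitivity (winv u ++ v ++ winv v).
  { rewrite (cancel_r' n v), app_nil_r. reflexivity. }
  transitivity (winv u ++ u ++ winv v).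
  { apply veq_app_r, veq_app_l. now symmetry. }
  apply cancel_l.
Qed.

Lemma winv_nil : winv [] = [].
Proof. reflexivity. Qed.

Definition cj (g u : word) : word := winv g ++ u ++ g.

Ltac norm := unfold comm, cj in *; rewrite ?winv_app, ?winv_winv, ?winv_nil, ?app_nil_l, ?app_nil_r; rewrite <- ?app_assoc.
Ltac canc := repeat (rewrite cancel_r || rewrite cancel_l || rewrite cancel_r' || rewrite cancel_l'); rewrite ?app_nil_r.

Lemma I1 n v w y : veq n (comm (v ++ w) y) (cj w (comm v y) ++ comm w y).
Proof. norm. canc. reflexivity. Qed.
Lemma I2 n u v w : veq n (comm u (v ++ w)) (comm u w ++ cj w (comm u v)).
Proof. norm. canc. reflexivity. Qed.
Lemma I3 n a b : veq n (comm (winv a) b) (cj (winv a) (winv (comm a b))).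
Proof. norm. canc. reflexivity. Qed.
Lemma I4 n a b : veq n (comm a (winv b)) (cj (winv b) (winv (comm a b))).
Proof. norm. canc. reflexivity. Qed.
Lemma I5 n y : veq n (comm [] y) [].
Proof. norm. canc. reflexivity. Qed.
Lemma I5' n y : veq n (comm y []) [].
Proof. norm. canc. reflexivity. Qed.
Lemma I6 n g a b : veq n (cj g (comm a b)) (comm (cj g a) (cj g b)).
Proof. norm. canc. reflexivity. Qed.
Lemma I7 n g u y : veq n (comm (cj g u) y) (cj g (comm u (y ++ comm y (winv g)))).
Proof. norm. canc. reflexivity. Qed.
Lemma cj_app n g u v : veq n (cj g (u ++ v)) (cj g u ++ cj g v).
Proof. norm. canc. reflexivity. Qed.
Lemma cj_nil n g : veq n (cj g []) [].
Proof. norm. canc. reflexivity. Qed.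
Lemma cj_winv g u : cj g (winv u) = winv (cj g u).
Proof. unfold cj. rewrite !winv_app, winv_winv. now rewrite app_assoc. Qed.

Lemma valid_app n u v : valid n u -> valid n v -> valid n (u ++ v).
Proof. intros; unfold valid in *; apply Forall_app; auto. Qed.

Lemma valid_app_inv n u v : valid n (u ++ v) -> valid n u /\ valid n v.
Proof. unfold valid; intros H; now apply Forall_app in H. Qed.

Lemma valid_winv n u : valid n u -> valid n (winv u).
Proof.
  unfold valid, winv. intros H. apply Forall_rev. apply Forall_map.
  eapply Forall_impl; [|exact H]. intros [g b]; simpl; auto.
Qed.

Lemma valid_nil n : valid n [].
Proof. constructor. Qed.

Lemma valid_comm n a b : valid n a -> valid n b -> valid n (comm a b).
Proof. intros. unfold comm. repeat apply valid_app; auto using valid_winv. Qed.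

Lemma valid_cj n g u : valid n g -> valid n u -> valid n (cj g u).
Proof. intros. unfold cj. repeat apply valid_app; auto using valid_winv. Qed.

#[global] Hint Resolve valid_app valid_winv valid_nil valid_comm valid_cj : vb.

Definition sg n (H : word -> Prop) :=
  (forall w, H w -> valid n w) /\ H [] /\ (forall u v, H u -> H v -> H (u ++ v)) /\
  (forall u, H u -> H (winv u)) /\ (forall u v, valid n v -> veq n u v -> H u -> H v).

Definition nsg n H := sg n H /\ (forall g u, valid n g -> H u -> H (cj g u)).

Lemma gen_sub_valid n X w : gen_sub n X w -> valid n w.
Proof. induction 1; auto with vb. Qed.

Lemma gen_sub_sg n X : sg n (gen_sub n X).
Proof.
  repeat split.
  - apply gen_sub_valid.
  - apply gs_one.
  - apply gs_mul.
  - apply gs_inv.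
  - intros u v Hv Huv Hu. eapply gs_eq; eauto.
Qed.

Lemma gen_sub_min n X H : sg n H -> (forall w, valid n w -> X w -> H w) ->
  forall w, gen_sub n X w -> H w.
Proof.
  intros (Hv & H0 & Hm & Hi & He) HX w Hw. induction Hw; auto.
  eapply He; eauto.
Qed.

Lemma gen_sub_nsg n X :
  (forall g w, valid n g -> valid n w -> X w -> gen_sub n X (cj g w)) -> nsg n (gen_sub n X).
Proof.
  intros HX. split; [apply gen_sub_sg|].
  intros g u Hg Hu. induction Hu as [|w Hw Xw|w Hw IH|u v Hu IHu Hv IHv|u v Hv Huv Hu IH].
  - eapply gs_eq; [| symmetry; apply cj_nil | apply gs_one]. auto with vb.
  - auto.
  - rewrite cj_winv. now apply gs_inv.
  - eapply gs_eq; [| symmetry; apply cj_app | apply gs_mul; auto].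
    apply valid_cj; auto. apply valid_app; eapply gen_sub_valid; eauto.
  - eapply gs_eq; [| | exact IH]. auto with vb. unfold cj. now rewrite Huv.
Qed.

Definition G2 n := Gamma2 n.
Definition K n := comm_sub n (Gamma2 n) (Gamma2 n).

Lemma G2_nsg n : nsg n (Gamma2 n).
Proof.
  apply gen_sub_nsg. intros g w Hg Hw (a & b & Ha & Hb & _ & _ & ->).
  eapply gs_eq; [auto with vb| symmetry; apply I6 |].
  apply gs_base; [auto with vb|]. exists (cj g a), (cj g b). repeat split; auto with vb.
Qed.

Lemma K_nsg n : nsg n (K n).
Proof.
  apply gen_sub_nsg. intros g w Hg Hw (a & b & Ha & Hb & HA & HB & ->).
  eapply gs_eq; [auto with vb| symmetry; apply I6 |].
  apply gs_base; [auto with vb|]. exists (cj g a), (cj g b).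
  destruct (G2_nsg n) as [_ Hc].
  repeat split; auto with vb.
Qed.

Lemma sg_eq n H u v : sg n H -> valid n v -> veq n u v -> H u -> H v.
Proof. intros (_&_&_&_&He). eauto. Qed.
Lemma sg_valid n H u : sg n H -> H u -> valid n u.
Proof. intros (Hv&_). eauto. Qed.
Lemma sg_nil n H : sg n H -> H [].
Proof. intros (_&H0&_). eauto. Qed.
Lemma sg_mul n H u v : sg n H -> H u -> H v -> H (u ++ v).
Proof. intros (_&_&Hm&_). eauto. Qed.
Lemma sg_inv n H u : sg n H -> H u -> H (winv u).
Proof. intros (_&_&_&Hi&_). eauto. Qed.
Lemma nsg_cj n H g u : nsg n H -> valid n g -> H u -> H (cj g u).
Proof. intros [_ Hc]. eauto. Qed.
Lemma sg_triv n H u : sg n H -> valid n u -> veq n [] u -> H u.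
Proof. intros Hs Hu He. eapply sg_eq; eauto. eapply sg_nil; eauto. Qed.

Lemma comm_reduce n H : nsg n H ->
  (forall s t : gen, 1 <= gidx s <= n - 1 -> 1 <= gidx t <= n - 1 ->
     H (comm [(s, false)] [(t, false)])) ->
  forall a b, valid n a -> valid n b -> H (comm a b).
Proof.
  intros HN Hg. pose proof (proj1 HN) as HS.
  assert (Hl : forall x y, valid n [x] -> valid n [y] -> H (comm [x] [y])).
  { intros [s bs] [t bt] Hx Hy.
    inversion Hx as [|? ? Hs _]; inversion Hy as [|? ? Ht _]; subst. simpl in Hs, Ht.
    assert (Hil : forall a b, valid n a -> valid n b -> H (comm a b) -> H (comm (winv a) b)).
    { intros a b Ha Hb Hab. eapply sg_eq; [exact HS| auto with vb | symmetry; apply I3 |].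
      apply (nsg_cj n); auto with vb. apply (sg_inv n); auto. }
    assert (Hir : forall a b, valid n a -> valid n b -> H (comm a b) -> H (comm a (winv b))).
    { intros a b Ha Hb Hab. eapply sg_eq; [exact HS| auto with vb | symmetry; apply I4 |].
      apply (nsg_cj n); auto with vb. apply (sg_inv n); auto. }
    assert (Vs : valid n [(s,false)]) by (repeat constructor; simpl; lia).
    assert (Vt : valid n [(t,false)]) by (repeat constructor; simpl; lia).
    destruct bs, bt.
    - change [(s,true)] with (winv [(s,false)]). change [(t,true)] with (winv [(t,false)]).
      apply Hir; auto with vb; apply Hil; auto.
    - change [(s,true)] with (winv [(s,false)]). apply Hil; auto.
    - change [(t,true)] with (winv [(t,false)]). apply Hir; auto.
    - auto. }
  assert (Hb : forall x b, valid n [x] -> valid n b -> H (comm [x] b)).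
  { intros x b Hx. induction b as [|y b IH]; intros Hb.
    - apply (sg_triv n); auto with vb. symmetry. apply I5'.
    - change (y :: b) with ([y] ++ b) in *. apply valid_app_inv in Hb as [Hy Hb'].
      eapply sg_eq; [exact HS | auto with vb | symmetry; apply I2 |].
      apply (sg_mul n); auto. apply (nsg_cj n); auto. }
  intros a b Ha. induction a as [|x a IH]; intros Hb'.
  - apply (sg_triv n); auto with vb. symmetry. apply I5.
  - change (x :: a) with ([x] ++ a) in *. apply valid_app_inv in Ha as [Hx Ha'].
    eapply sg_eq; [exact HS | auto with vb | symmetry; apply I1 |].
    apply (sg_mul n); auto. apply (nsg_cj n); auto.
Qed.

Definition far (a b : nat) := a + 2 <= b \/ b + 2 <= a.
Definition setidx (g : gen) (k : nat) : gen := match g with sig _ => sig k | rho _ => rho k end.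
Definition commutes n (a b : word) := veq n (a ++ b) (b ++ a).

Lemma rel0 n l r : vb_rel n l r -> veq n l r.
Proof. intros H. pose proof (veq_rel n [] [] l r H) as E. now rewrite !app_nil_r in E. Qed.

Lemma step n p l r s : veq n l r -> veq n (p ++ l ++ s) (p ++ r ++ s).
Proof. intros H. now rewrite H. Qed.

Lemma commutes_winv n a b : commutes n a b -> commutes n (winv a) b.
Proof.
  unfold commutes. intros H.
  transitivity (winv a ++ b ++ a ++ winv a).
  { rewrite (cancel_r' n a), app_nil_r. reflexivity. }
  rewrite (app_assoc b a), <- H, <- app_assoc. rewrite cancel_l. reflexivity.
Qed.

Lemma commutes_app n a a' b : commutes n a b -> commutes n a' b -> commutes n (a ++ a') b.
Proof.
  unfold commutes. intros H H'. rewrite <- app_assoc, H', app_assoc, H, app_assoc. reflexivity.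
Qed.

Lemma commutes_comm n a a' b : commutes n a b -> commutes n a' b -> commutes n (comm a a') b.
Proof.
  intros. unfold comm. repeat apply commutes_app; auto using commutes_winv.
Qed.

Lemma comm_triv n c y : commutes n c y -> veq n (comm c y) [].
Proof.
  unfold commutes, comm. intros H. rewrite H. rewrite cancel_l. apply cancel_l'.
Qed.

Lemma far_comm n g1 g2 : 1 <= gidx g1 <= n - 1 -> 1 <= gidx g2 <= n - 1 ->
  far (gidx g1) (gidx g2) -> commutes n [(g1,false)] [(g2,false)].
Proof.
  unfold far, commutes. destruct g1 as [i|i], g2 as [j|j]; simpl; intros.
  - apply rel0. apply rel_comm_s; lia.
  - apply rel0. apply rel_comm_sr; lia.
  - symmetry. apply rel0. apply rel_comm_sr; lia.
  - apply rel0. apply rel_comm_r; lia.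
Qed.

Lemma K_comm n a b : Gamma2 n a -> Gamma2 n b -> K n (comm a b).
Proof.
  intros Ha Hb. apply gs_base.
  - apply valid_comm; eapply gen_sub_valid; eauto.
  - exists a, b. repeat split; auto; eapply gen_sub_valid; eauto.
Qed.

Lemma G2_comm n a b : valid n a -> valid n b -> Gamma2 n (comm a b).
Proof.
  intros Ha Hb. apply gs_base; auto with vb. exists a, b. repeat split; auto.
Qed.

Lemma L1 n u y h : valid n y -> Gamma2 n u -> Gamma2 n h -> K n (comm u y) -> K n (comm u (y ++ h)).
Proof.
  intros Hy Hu Hh Hk. pose proof (proj1 (K_nsg n)) as HS.
  assert (Vu := gen_sub_valid _ _ _ Hu). assert (Vh := gen_sub_valid _ _ _ Hh).
  eapply (sg_eq n); [exact HS | auto with vb | symmetry; apply I2 |].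
  apply (sg_mul n); auto. apply K_comm; auto. apply (nsg_cj n); auto. apply K_nsg.
Qed.

Definition Ny n y (g : word) := Gamma2 n g /\ K n (comm g y).

Lemma Ny_nsg n y : valid n y -> nsg n (Ny n y).
Proof.
  intros Vy. pose proof (G2_nsg n) as HG. pose proof (K_nsg n) as HK.
  pose proof (proj1 HG) as HGs. pose proof (proj1 HK) as HKs.
  split; [split; [|split; [|split; [|split]]]|].
  - intros w [Hw _]. eapply gen_sub_valid; eauto.
  - split; [apply gs_one|]. apply (sg_triv n); auto with vb. symmetry; apply I5.
  - intros u v [Hu Ku] [Hv Kv]. split; [apply (sg_mul n); auto|].
    assert (Vu := gen_sub_valid _ _ _ Hu). assert (Vv := gen_sub_valid _ _ _ Hv).
    eapply (sg_eq n); [exact HKs | auto with vb | symmetry; apply I1 |].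
    apply (sg_mul n); auto. apply (nsg_cj n); auto.
  - intros u [Hu Ku]. split; [apply (sg_inv n); auto|].
    assert (Vu := gen_sub_valid _ _ _ Hu).
    eapply (sg_eq n); [exact HKs | auto with vb | symmetry; apply I3 |].
    apply (nsg_cj n); auto with vb. apply (sg_inv n); auto.
  - intros u v Vv Huv [Hu Ku]. split; [eapply (sg_eq n); eauto|].
    eapply (sg_eq n); [exact HKs | auto with vb | |exact Ku]. unfold comm. now rewrite Huv.
  - intros g u Vg [Hu Ku]. split; [apply (nsg_cj n); auto|].
    assert (Vu := gen_sub_valid _ _ _ Hu).
    eapply (sg_eq n); [exact HKs | auto with vb | symmetry; apply I7 |].
    apply (nsg_cj n); auto. apply L1; auto.
    apply G2_comm; auto with vb.
Qed.

Lemma Ny_far n y y' c : valid n y -> valid n y' -> Gamma2 n c -> Gamma2 n (winv y' ++ y) ->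
  commutes n c y' -> Ny n y c.
Proof.
  intros Vy Vy' Hc Hh Hcom. split; auto. assert (Vc := gen_sub_valid _ _ _ Hc).
  pose proof (proj1 (K_nsg n)) as HKs.
  eapply (sg_eq n); [exact HKs | auto with vb | |].
  2:{ apply (L1 n c y' (winv y' ++ y)); auto.
      apply (sg_triv n); auto with vb. symmetry. now apply comm_triv. }
  unfold comm. rewrite (cancel_r n y'). reflexivity.
Qed.

Lemma E_adj n c x x' : valid n c -> valid n x -> veq n (c ++ x) (x' ++ c) -> valid n x' ->
  Gamma2 n (winv x ++ x').
Proof.
  intros Vc Vx H Vx'. eapply gs_eq; [auto with vb| |apply (G2_comm n x (winv c)); auto with vb].
  unfold comm. rewrite winv_winv. rewrite (app_assoc c x), H, <- app_assoc, cancel_r', app_nil_r.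
  reflexivity.
Qed.

Lemma chain n (X : nat -> word) :
  (forall i, 1 <= i <= n - 1 -> valid n (X i)) ->
  (forall i, 1 <= i -> i + 1 <= n - 1 -> Gamma2 n (winv (X i) ++ X (i + 1))) ->
  forall j l, 1 <= j <= n - 1 -> 1 <= l <= n - 1 -> Gamma2 n (winv (X l) ++ X j).
Proof.
  intros HV Hadj.
  pose proof (proj1 (G2_nsg n)) as HS.
  assert (Hd : forall d i, 1 <= i -> i + d <= n - 1 -> Gamma2 n (winv (X i) ++ X (i + d))).
  { induction d as [|d IH]; intros i Hi Hid.
    - rewrite Nat.add_0_r. apply (sg_triv n); [exact HS | apply valid_app; [apply valid_winv|]; apply HV; lia | symmetry; apply cancel_l'].
    - assert (E : Gamma2 n ((winv (X i) ++ X (i + d)) ++ (winv (X (i + d)) ++ X (i + d + 1)))).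
      { apply (sg_mul n); [exact HS | apply IH | apply Hadj]; lia. }
      eapply (sg_eq n); [exact HS | | | exact E].
      + apply valid_app; [apply valid_winv|]; apply HV; lia.
      + rewrite <- app_assoc, (app_assoc (X (i + d))), cancel_r', app_nil_l.
        replace (i + Datatypes.S d) with (i + d + 1) by lia. reflexivity. }
  intros j l Hj Hl.
  destruct (Nat.le_gt_cases l j).
  - replace j with (l + (j - l)) by lia. apply Hd; lia.
  - replace l with (j + (l - j)) by lia.
    assert (E := Hd (l - j) j ltac:(lia) ltac:(lia)).
    apply (sg_inv n) in E; auto. rewrite winv_app, winv_winv in E. exact E.
Qed.

Lemma valid1 n g b : 1 <= gidx g <= n - 1 -> valid n [(g, b)].
Proof. intros. repeat constructor; simpl; lia. Qed.

Lemma same_type n g l : 1 <= gidx g <= n - 1 -> 1 <= l <= n - 1 ->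
  Gamma2 n (winv [(setidx g l, false)] ++ [(g, false)]).
Proof.
  destruct g as [j|j]; simpl; intros Hj Hl.
  - apply (chain n S); auto.
    + intros i Hi. apply (valid1 n (sig i)); simpl; lia.
    + intros i Hi Hi'. apply (E_adj n (P i ++ P (i+1))).
      * apply valid_app; apply (valid1 n (rho _)); simpl; lia.
      * apply (valid1 n (sig i)); simpl; lia.
      * rewrite <- app_assoc. apply rel0. apply rel_mixed; lia.
      * apply (valid1 n (sig _)); simpl; lia.
  - apply (chain n P); auto.
    + intros i Hi. apply (valid1 n (rho i)); simpl; lia.
    + intros i Hi Hi'. apply (E_adj n (P i ++ P (i+1))).
      * apply valid_app; apply (valid1 n (rho _)); simpl; lia.
      * apply (valid1 n (rho i)); simpl; lia.
      * rewrite <- !app_assoc. apply rel0. apply rel_braid_r; lia.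
      * apply (valid1 n (rho _)); simpl; lia.
Qed.

Definition cc : word := P 1 ++ P 2 ++ P 3.

Lemma conj_from n c x x' : veq n (c ++ x) (x' ++ c) -> veq n (cj (winv c) x) x'.
Proof.
  intros H. unfold cj. rewrite winv_winv, app_assoc, H, <- app_assoc, cancel_r', app_nil_r.
  reflexivity.
Qed.

Lemma shift n g : 5 <= n -> gidx g = 1 \/ gidx g = 2 ->
  veq n (cj (winv cc) [(g,false)]) [(setidx g (gidx g + 1), false)].
Proof.
  intros Hn Hg. apply conj_from. unfold cc.
  destruct g as [i|i]; simpl in Hg; destruct Hg as [-> | ->]; simpl.
  - eapply veq_trans. { apply (step n (P 1 ++ P 2) (P 3 ++ S 1) (S 1 ++ P 3) []).
      symmetry. apply rel0. apply rel_comm_sr; lia. }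
    eapply veq_trans. { apply (step n [] (P 1 ++ P 2 ++ S 1) (S 2 ++ P 1 ++ P 2) (P 3)).
      apply rel0. apply (rel_mixed n 1); lia. }
    apply veq_refl.
  - eapply veq_trans. { apply (step n (P 1) (P 2 ++ P 3 ++ S 2) (S 3 ++ P 2 ++ P 3) []).
      apply rel0. apply (rel_mixed n 2); lia. }
    eapply veq_trans. { apply (step n [] (P 1 ++ S 3) (S 3 ++ P 1) (P 2 ++ P 3)).
      symmetry. apply rel0. apply rel_comm_sr; lia. }
    apply veq_refl.
  - eapply veq_trans. { apply (step n (P 1 ++ P 2) (P 3 ++ P 1) (P 1 ++ P 3) []).
      apply rel0. apply rel_comm_r; lia. }
    eapply veq_trans. { apply (step n [] (P 1 ++ P 2 ++ P 1) (P 2 ++ P 1 ++ P 2) (P 3)).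
      apply rel0. apply (rel_braid_r n 1); lia. }
    apply veq_refl.
  - eapply veq_trans. { apply (step n (P 1) (P 2 ++ P 3 ++ P 2) (P 3 ++ P 2 ++ P 3) []).
      apply rel0. apply (rel_braid_r n 2); lia. }
    eapply veq_trans. { apply (step n [] (P 1 ++ P 3) (P 3 ++ P 1) (P 2 ++ P 3)).
      apply rel0. apply rel_comm_r; lia. }
    apply veq_refl.
Qed.

#[global] Instance comm_prop n : Proper (veq n ==> veq n ==> veq n) comm.
Proof. intros u u' Hu v v' Hv. unfold comm. now rewrite Hu, Hv. Qed.

Lemma idx_cases n i j : 5 <= n -> 1 <= i <= n - 1 -> 1 <= j <= n - 1 ->
  far i j \/ (i = 2 /\ j = 3) \/ (i = 3 /\ j = 2) \/
  exists l, 1 <= l <= n - 1 /\ far l i /\ far l j.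
Proof.
  unfold far. intros Hn Hi Hj.
  destruct (Nat.le_gt_cases (i + 2) j); [left; lia|].
  destruct (Nat.le_gt_cases (j + 2) i); [left; lia|].
  assert (C : (3 <= i /\ 3 <= j) \/ (i <= 2 /\ j <= 2) \/ (i = 2 /\ j = 3) \/ (i = 3 /\ j = 2)) by lia.
  destruct C as [C|[C|[C|C]]].
  - right; right; right. exists 1. lia.
  - right; right; right. exists 4. lia.
  - right; left; exact C.
  - right; right; left; exact C.
Qed.

Lemma gidx_setidx g k : gidx (setidx g k) = k.
Proof. destruct g; reflexivity. Qed.

Lemma setidx_back s : gidx s = 2 \/ gidx s = 3 ->
  setidx (setidx s (gidx s - 1)) (gidx (setidx s (gidx s - 1)) + 1) = s.
Proof. rewrite gidx_setidx. destruct s; simpl; intros; f_equal; lia. Qed.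

Lemma Ny_B n yt s t : 5 <= n -> 1 <= gidx yt <= n - 1 ->
  1 <= gidx s <= n - 1 -> 1 <= gidx t <= n - 1 ->
  (exists l, 1 <= l <= n - 1 /\ far l (gidx s) /\ far l (gidx t)) ->
  Ny n [(yt,false)] (comm [(s,false)] [(t,false)]).
Proof.
  intros Hn Hy Hs Ht [l [Hl [F1 F2]]].
  apply (Ny_far n _ [(setidx yt l, false)]).
  - apply valid1; auto.
  - apply valid1; rewrite gidx_setidx; lia.
  - apply G2_comm; apply valid1; auto.
  - apply same_type; auto.
  - apply commutes_comm; apply far_comm; rewrite ?gidx_setidx; auto; unfold far in *; lia.
Qed.

Lemma Ny_gens n yt : 5 <= n -> 1 <= gidx yt <= n - 1 ->
  forall s t : gen, 1 <= gidx s <= n - 1 -> 1 <= gidx t <= n - 1 ->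
  Ny n [(yt,false)] (comm [(s,false)] [(t,false)]).
Proof.
  intros Hn Hy s t Hs Ht.
  assert (HN := Ny_nsg n [(yt,false)] (valid1 n yt false Hy)).
  destruct (idx_cases n (gidx s) (gidx t) Hn Hs Ht) as [F|[C|[C|C]]].
  - apply (sg_triv n); [exact (proj1 HN) | apply valid_comm; apply valid1; auto |].
    symmetry. apply comm_triv. apply far_comm; auto.
  - set (s0 := setidx s (gidx s - 1)). set (t0 := setidx t (gidx t - 1)).
    assert (B0 : Ny n [(yt,false)] (comm [(s0,false)] [(t0,false)])).
    { apply Ny_B; subst s0 t0; rewrite ?gidx_setidx; try lia. exists 4. unfold far; lia. }
    eapply (sg_eq n); [exact (proj1 HN) | apply valid_comm; apply valid1; auto | |
      apply (nsg_cj n _ (winv cc)); [exact HN | | exact B0]].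
    2: { apply valid_winv; unfold cc; apply valid_app; [|apply valid_app]; apply (valid1 n (rho _)); simpl; lia. }
    rewrite I6. rewrite !shift by (subst s0 t0; rewrite ?gidx_setidx; lia).
    subst s0 t0. rewrite !setidx_back by lia. reflexivity.
  - set (s0 := setidx s (gidx s - 1)). set (t0 := setidx t (gidx t - 1)).
    assert (B0 : Ny n [(yt,false)] (comm [(s0,false)] [(t0,false)])).
    { apply Ny_B; subst s0 t0; rewrite ?gidx_setidx; try lia. exists 4. unfold far; lia. }
    eapply (sg_eq n); [exact (proj1 HN) | apply valid_comm; apply valid1; auto | |
      apply (nsg_cj n _ (winv cc)); [exact HN | | exact B0]].
    2: { apply valid_winv; unfold cc; apply valid_app; [|apply valid_app]; apply (valid1 n (rho _)); simpl; lia. }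
    rewrite I6. rewrite !shift by (subst s0 t0; rewrite ?gidx_setidx; lia).
    subst s0 t0. rewrite !setidx_back by lia. reflexivity.
  - apply Ny_B; auto.
Qed.

Lemma G2_sub_Ny n yt : 5 <= n -> 1 <= gidx yt <= n - 1 ->
  forall w, Gamma2 n w -> Ny n [(yt,false)] w.
Proof.
  intros Hn Hy. assert (HN := Ny_nsg n [(yt,false)] (valid1 n yt false Hy)).
  apply (gen_sub_min n); [exact (proj1 HN)|].
  intros w Vw (a & b & Ha & Hb & _ & _ & ->).
  apply (comm_reduce n); auto. apply Ny_gens; auto.
Qed.

Lemma K_gens n : 5 <= n -> forall x y : gen, 1 <= gidx x <= n - 1 -> 1 <= gidx y <= n - 1 ->
  K n (comm [(x,false)] [(y,false)]).
Proof.
  intros Hn x y Hx Hy.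
  set (k := if 3 <=? gidx y then 1 else 4).
  assert (Fk : far k (gidx y)) by (unfold far, k; destruct (Nat.leb_spec 3 (gidx y)); lia).
  assert (Rk : 1 <= k <= n - 1) by (unfold k; destruct (Nat.leb_spec 3 (gidx y)); lia).
  set (z := setidx x k).
  assert (Vz : valid n [(z,false)]) by (apply valid1; unfold z; rewrite gidx_setidx; auto).
  assert (Vx := valid1 n x false Hx). assert (Vy := valid1 n y false Hy).
  set (a := [(x,false)] ++ winv [(z,false)]).
  assert (Ga : Gamma2 n a).
  { eapply (sg_eq n); [exact (proj1 (G2_nsg n)) | unfold a; auto with vb | |
      apply (nsg_cj n _ (winv [(z,false)])); [apply G2_nsg | auto with vb | apply (same_type n x k); auto]].
    unfold cj, a. rewrite winv_winv. change (setidx x k) with z. rewrite <- app_assoc, cancel_r. reflexivity. }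
  assert (Ka : K n (comm a [(y,false)])) by (apply (G2_sub_Ny n y); auto).
  pose proof (proj1 (K_nsg n)) as HKs.
  eapply (sg_eq n); [exact HKs | auto with vb | |
    apply (sg_mul n _ (cj [(z,false)] (comm a [(y,false)])) (comm [(z,false)] [(y,false)]));
      [exact HKs | apply (nsg_cj n); [apply K_nsg | auto | exact Ka] | ]].
  - rewrite <- I1. unfold a. rewrite <- app_assoc, cancel_l', app_nil_r. reflexivity.
  - apply (sg_triv n); [exact HKs | auto with vb |]. symmetry. apply comm_triv.
    apply far_comm; unfold z; rewrite ?gidx_setidx; auto.
Qed.

Theorem proposition4p5 (n : nat) : 5 <= n ->
  forall w : word, valid n w ->
    (Gamma2 n w <-> comm_sub n (Gamma2 n) (Gamma2 n) w).
Proof.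
  intros Hn w Vw. split.
  - intros H. refine (gen_sub_min n _ (K n) (proj1 (K_nsg n)) _ w H).
    intros u Vu (a & b & Ha & Hb & _ & _ & ->).
    apply (comm_reduce n); auto. apply K_nsg. intros s t Hs Ht. apply K_gens; auto.
  - intros H. refine (gen_sub_min n _ (Gamma2 n) (proj1 (G2_nsg n)) _ w H).
    intros u Vu (a & b & Ha & Hb & _ & _ & ->). apply G2_comm; auto.
Qed.
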